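(* There is an absolute constant $C>0$ such that for all integers $n \ge m > l \ge 0$ and all $M > 0$, $$R_{K_n\times K_n}(2^{-m}, 2^{-l}, M) \le C\,\frac{1+M}{m-l}.$$
   Context: $K_n := \{\sum_{k=1}^\infty a_k 4^{-k} : a_k \in \{0,3\} \text{ for } 1 \le k \le n,\ a_k \in \{0,1,2,3\} \text{ for } k > n\}$. For $E \subset \mathbb{R}^2$ and $\varepsilon, r, M > 0$ the rectifiability constant is $$R_E(\varepsilon,r,M) = \sup \frac{m(\{x \in J : x\omega_1 + (F(x)+y)\omega_2 \in E \text{ for some } -\varepsilon \le y \le \varepsilon\})}{m(J)},$$ where $m$ is Lebesgue measure on $\mathbb{R}$ and the supremum is over all orthonormal $\omega_1,\omega_2 \in S^1$, all $F:\mathbb{R}\to\mathbb{R}$ with Lipschitz constant at most $M$, and all intervals $J \subset \mathbb{R}$ of length at least $r$. *)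

(* Defs.v *)
From HB Require Import structures.
From mathcomp Require Import all_boot all_order all_algebra.
From mathcomp Require Import all_classical all_reals all_analysis.
Set Implicit Arguments. Unset Strict Implicit. Unset Printing Implicit Defensive.
Import Order.TTheory GRing.Theory Num.Theory.
Import numFieldNormedType.Exports.
Local Open Scope classical_set_scope.
Local Open Scope ring_scope.

Definition Kset (R : realType) (n : nat) : set R :=
  [set x | exists a : nat -> nat,
      (forall k, (1 <= k <= n)%N -> a k = 0%N \/ a k = 3%N) /\
      (forall k, (a k <= 3)%N) /\
      x = limn (fun N => \sum_(1 <= k < N) ((a k)%:R / 4%:R ^+ k : R))].

Definition orthonormal2 (R : realType) (w1 w2 : R * R) : Prop :=
  w1.1 ^+ 2 + w1.2 ^+ 2 = 1 /\ w2.1 ^+ 2 + w2.2 ^+ 2 = 1 /\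
  w1.1 * w2.1 + w1.2 * w2.2 = 0.

Definition lipschitz_le (R : realType) (F : R -> R) (M : R) : Prop :=
  forall x y, `|F x - F y| <= M * `|x - y|.

Definition graph_pt (R : realType) (w1 w2 : R * R) (F : R -> R) (x y : R) : R * R :=
  (x * w1.1 + (F x + y) * w2.1, x * w1.2 + (F x + y) * w2.2).

Definition hit_set (R : realType) (E : set (R * R)) (eps : R)
    (w1 w2 : R * R) (F : R -> R) (a b : R) : set R :=
  [set x | x \in `[a, b] /\ exists y, -eps <= y <= eps /\ E (graph_pt w1 w2 F x y)].

Definition rect_const (R : realType) (E : set (R * R)) (eps r M : R) : \bar R :=
  ereal_sup [set v | exists w1 w2 F a b,
     orthonormal2 w1 w2 /\ lipschitz_le F M /\ r <= b - a /\
     v = (lebesgue_measure (hit_set E eps w1 w2 F a b) * ((b - a)^-1)%:E)%E].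

(* Main.v *)
Require Import Defs.
From HB Require Import structures.
From mathcomp Require Import all_boot all_order all_algebra.
From mathcomp Require Import all_classical all_reals all_analysis.
From mathcomp Require Import ring lra zify measurable_realfun.
Import Order.TTheory GRing.Theory Num.Theory.
Import numFieldNormedType.Exports.
Local Open Scope classical_set_scope.
Local Open Scope ring_scope.

Section Generic.
Context {R : realType}.

Lemma lip_cont (h : R -> R) L : 0 < L ->
  (forall x y, `|h x - h y| <= L * `|x - y|) -> continuous h.
Proof.
move=> L0 hL x; apply/cvgrPdist_le => e e0.
exists (e / L); first by rewrite /= divr_gt0.
move=> y /= xy.
by rewrite (le_trans (hL x y))// mulrC -ler_pdivlMr// ltW.
Qed.

Lemma maxle (x y z w K : R) : x <= z + K -> y <= w + K ->
  Num.max x y <= Num.max z w + K.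
Proof.
move=> h1 h2; rewrite ge_max; apply/andP; split.
  by rewrite (le_trans h1)// lerD2r le_max lexx.
by rewrite (le_trans h2)// lerD2r le_max lexx orbT.
Qed.

Lemma crossing (h : R -> R) (L s1 s2 r1 r2 : R) : 0 < L ->
  (forall s t, h s <= h t + L * `|s - t|) ->
  s1 <= s2 -> h s1 <= r1 -> r1 < r2 -> r2 <= h s2 ->
  exists u v, [/\ s1 <= u, u <= v, v <= s2, r2 - r1 <= L * (v - u) &
    forall s, u < s -> s < v -> r1 < h s /\ h s < r2].
Proof.
move=> L0 hL s12 hs1 r12 hs2.
pose A := [set s | s1 <= s <= s2 /\ h s <= r1].
have A1 : A s1 by split => //; rewrite lexx s12.
have hsA : has_sup A.
  split; first by exists s1.
  by exists s2 => s [/andP[_ ->]].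
pose u := sup A.
have s1u : s1 <= u by exact: sup_upper_bound.
have us2 : u <= s2 by apply: ge_sup; [exists s1|move=> s [/andP[_ ->]]].
have hu : h u <= r1.
  apply/ler_addgt0Pr => e e0.
  have [s As lts] := sup_adherent (divr_gt0 e0 L0) hsA.
  have su : s <= u by exact: sup_upper_bound.
  rewrite (le_trans (hL u s))// ger0_norm ?subr_ge0//.
  have: u - s < e / L by rewrite ltrBlDr addrC -ltrBlDr.
  move=> H; rewrite lerD//; first by case: As.
  by rewrite mulrC -ler_pdivlMr// ltW.
have hgt : forall s, u < s -> s <= s2 -> r1 < h s.
  move=> s us ss2; rewrite ltNge; apply/negP => hs.
  have : s <= u by apply: sup_upper_bound => //; split => //; rewrite ss2 andbT (le_trans s1u)// ltW.
  by rewrite leNgt us.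
pose B := [set s | u <= s <= s2 /\ r2 <= h s].
have B2 : B s2 by split => //; rewrite lexx us2.
have hiB : has_inf B.
  split; first by exists s2.
  by exists u => s [/andP[-> _]].
pose v := inf B.
have uv : u <= v by apply: lb_le_inf; [exists s2|move=> s [/andP[-> _]]].
have vs2 : v <= s2 by apply: ge_inf => //; case: hiB.
have hv : r2 <= h v.
  apply/ler_addgt0Pr => e e0.
  have [s Bs lts] := inf_adherent (divr_gt0 e0 L0) hiB.
  have vs : v <= s by apply: ge_inf => //; case: hiB.
  case: Bs => _ hs.
  rewrite (le_trans hs)// (le_trans (hL s v))// lerD2l.
  rewrite ger0_norm ?subr_ge0// mulrC -ler_pdivlMr// ltW//.
  by rewrite ltrBlDr addrC.
exists u, v; split => //.
  have : h v - h u <= L * `|v - u| by rewrite lerBlDr addrC hL.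
  by rewrite ger0_norm ?subr_ge0//; apply: le_trans; rewrite lerB.
move=> s us sv; split; first by apply: hgt => //; rewrite (le_trans (ltW sv)).
rewrite ltNge; apply/negP => hs.
have : v <= s by apply: ge_inf => //; [case: hiB|split=> //; rewrite (ltW us) (le_trans (ltW sv))].
by rewrite leNgt sv.
Qed.

End Generic.

Section Sq.
Context {R : realType}.
Definition dd (p s t : R) := Num.max (p - t) (t - (p + s)).
Definition sqd (x0 y0 s : R) (z : R * R) := Num.max (dd x0 s z.1) (dd y0 s z.2).

Lemma sqd_leP x0 y0 s z r : sqd x0 y0 s z <= r <->
  [/\ x0 - r <= z.1, z.1 <= x0 + s + r, y0 - r <= z.2 & z.2 <= y0 + s + r].
Proof.
rewrite /sqd /dd !ge_max; split.
  by move=> /andP[/andP[h1 h2] /andP[h3 h4]]; split; lra.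
by case=> h1 h2 h3 h4; apply/andP; split; apply/andP; split; lra.
Qed.

Lemma sq_le1 (x y : R) : x ^+ 2 + y ^+ 2 = 1 -> `|x| <= 1.
Proof.
move=> h; have hx : `|x| ^+ 2 <= 1 by rewrite real_normK ?num_real//; have := sqr_ge0 y; lra.
have := normr_ge0 x; move: hx; set t := `|x|; move=> hx ht; nra.
Qed.
End Sq.

Section Geo.
Context {R : realType} (w1 w2 : R * R) (F : R -> R) (M a b : R).
Hypotheses (hw : orthonormal2 w1 w2) (hF : lipschitz_le F M) (M0 : 0 < M).

Definition gam (s : R) : R * R := graph_pt w1 w2 F s 0.

Let w11 : `|w1.1| <= 1. Proof. by case: hw => h _; exact: sq_le1 h. Qed.
Let w21 : `|w2.1| <= 1. Proof. by case: hw => _ [h _]; exact: sq_le1 h. Qed.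
Let w12 : `|w1.2| <= 1. Proof. by case: hw => h _; rewrite addrC in h; exact: sq_le1 h. Qed.
Let w22 : `|w2.2| <= 1. Proof. by case: hw => _ [h _]; rewrite addrC in h; exact: sq_le1 h. Qed.

Lemma lipcomb (u v s t : R) : `|u| <= 1 -> `|v| <= 1 ->
  `|(s * u + (F s + 0) * v) - (t * u + (F t + 0) * v)| <= (1 + M) * `|s - t|.
Proof.
move=> hu hv.
have -> : (s * u + (F s + 0) * v) - (t * u + (F t + 0) * v) =
  (s - t) * u + (F s - F t) * v by ring.
rewrite (le_trans (ler_normD _ _))// !normrM mulrDl mul1r lerD//.
  by rewrite ler_piMr.
rewrite (le_trans (ler_wpM2r (normr_ge0 _) (hF s t)))//.
by rewrite ler_piMr// mulr_ge0// ltW.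
Qed.

Lemma gam1_lip s t : `|(gam s).1 - (gam t).1| <= (1 + M) * `|s - t|.
Proof. exact: lipcomb. Qed.
Lemma gam2_lip s t : `|(gam s).2 - (gam t).2| <= (1 + M) * `|s - t|.
Proof. exact: lipcomb. Qed.

Lemma gam_lower s t : (s - t) ^+ 2 <=
  ((gam s).1 - (gam t).1) ^+ 2 + ((gam s).2 - (gam t).2) ^+ 2.
Proof.
case: hw => h1 [h2 h3].
rewrite /gam /graph_pt /=.
have -> : (s * w1.1 + (F s + 0) * w2.1 - (t * w1.1 + (F t + 0) * w2.1)) ^+ 2 +
  (s * w1.2 + (F s + 0) * w2.2 - (t * w1.2 + (F t + 0) * w2.2)) ^+ 2 =
  (s - t) ^+ 2 * (w1.1 ^+ 2 + w1.2 ^+ 2) + (F s - F t) ^+ 2 * (w2.1 ^+ 2 + w2.2 ^+ 2)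
  + 2 * (s - t) * (F s - F t) * (w1.1 * w2.1 + w1.2 * w2.2) by ring.
rewrite h1 h2 h3 !mulr1 mulr0 addr0 lerDl; exact: sqr_ge0.
Qed.

Lemma gam_close s t D : `|(gam s).1 - (gam t).1| <= D ->
  `|(gam s).2 - (gam t).2| <= D -> `|s - t| <= 2 * D.
Proof.
move=> d1 d2; have := gam_lower s t.
rewrite -(real_normK (num_real (s - t))) -(real_normK (num_real ((gam s).1 - _))).
rewrite -(real_normK (num_real ((gam s).2 - _))).
have := normr_ge0 (s - t); have := normr_ge0 ((gam s).1 - (gam t).1).
have := normr_ge0 ((gam s).2 - (gam t).2).
move: d1 d2.
set A := `|s - t|; set X := `|_ - _|; set Y := `|_ - _|.
move=> d1 d2 hY hX hA H; nra.
Qed.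

Definition hq (x0 y0 s : R) (t : R) := sqd x0 y0 s (gam t).

Lemma hq_lip x0 y0 s t1 t2 : hq x0 y0 s t1 <= hq x0 y0 s t2 + (1 + M) * `|t1 - t2|.
Proof.
have := gam1_lip t1 t2; have := gam2_lip t1 t2.
rewrite /hq /sqd /dd; set K := (1 + M) * _.
move=> /ler_normlP[h2 h2'] /ler_normlP[h1 h1'].
by apply: maxle; apply: maxle; lra.
Qed.

Lemma hq_abs x0 y0 s t1 t2 : `|hq x0 y0 s t1 - hq x0 y0 s t2| <= (1 + M) * `|t1 - t2|.
Proof.
have := hq_lip x0 y0 s t1 t2; have := hq_lip x0 y0 s t2 t1.
rewrite distrC; move=> h1 h2; apply/ler_normlP; split; lra.
Qed.

Lemma hq_cont x0 y0 s : continuous (hq x0 y0 s).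
Proof. by apply: (@lip_cont _ _ (1 + M)); [exact: addr_gt0 ltr01 M0|exact: hq_abs]. Qed.

End Geo.


Lemma lmono {R : realType} {A B : set R} : A `<=` B ->
  (lebesgue_measure A <= lebesgue_measure B)%E.
Proof. move=> AB. exact: le_outer_measure. Qed.

Section Meas.
Context {R : realType} (w1 w2 : R * R) (F : R -> R) (M a b : R).
Hypotheses (hw : orthonormal2 w1 w2) (hF : lipschitz_le F M) (M0 : 0 < M) (ab : a <= b).

Local Notation gam := (gam w1 w2 F).

Definition pre (S : set (R * R)) : set R := [set t | a <= t <= b /\ S (gam t)].
Definition mu (S : set (R * R)) : R := fine (lebesgue_measure (pre S)).

Lemma pre_sub S : pre S `<=` `[a, b].
Proof. by move=> t [h _]; rewrite /= in_itv /=. Qed.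

Lemma lm_pre S : lebesgue_measure (pre S) = (mu S)%:E.
Proof.
rewrite /mu fineK// ge0_fin_numE ?measure_ge0//.
rewrite (le_lt_trans (lmono (pre_sub S)))//.
by rewrite lebesgue_measure_itv/=; case: ifP => _; rewrite ?ltry.
Qed.

Lemma mu_ge0 S : 0 <= mu S.
Proof. by rewrite -lee_fin -lm_pre measure_ge0. Qed.

Lemma mu_le S : mu S <= b - a.
Proof.
rewrite -lee_fin -lm_pre (le_trans (lmono (pre_sub S)))//.
rewrite lebesgue_measure_itv/=; case: ifP => _; rewrite ?lee_fin ?subr_ge0//.
Qed.

Lemma mu_mono S T : S `<=` T -> mu S <= mu T.
Proof.
move=> ST; rewrite -lee_fin -!lm_pre; apply: lmono => t [h1 h2]; split => //.
exact: ST.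
Qed.

Lemma pre_setU S T : pre (S `|` T) = pre S `|` pre T.
Proof.
apply/seteqP; split => t.
  by move=> [h [?|?]]; [left|right].
by move=> [[h ?]|[h ?]]; split => //; [left|right].
Qed.

Lemma mu_U S T : measurable (pre S) -> measurable (pre T) ->
  mu (S `|` T) <= mu S + mu T.
Proof.
move=> mS mT; rewrite -lee_fin EFinD -!lm_pre pre_setU; exact: measureU2.
Qed.

Lemma mu_Udisj S T : measurable (pre S) -> measurable (pre T) ->
  S `&` T = set0 -> mu (S `|` T) = mu S + mu T.
Proof.
move=> mS mT dST; apply/EFin_inj; rewrite EFinD -!lm_pre pre_setU measureU//.
apply/seteqP; split => t // [[_ h1] [_ h2]].
by have : (S `&` T) (gam t) by []; rewrite dST.
Qed.

Lemma mu_itv S u v : a <= u -> v <= b ->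
  (forall s, u < s -> s < v -> S (gam s)) -> v - u <= mu S.
Proof.
move=> au vb H; rewrite -lee_fin -lm_pre.
have sub : `]u, v[ `<=` pre S.
  move=> s; rewrite /= in_itv /= => /andP[us sv]; split; last exact: H.
  by apply/andP; split; [rewrite (le_trans au)// ltW|rewrite (le_trans (ltW sv))].
apply: le_trans (lmono sub).
rewrite lebesgue_measure_itv/=; case: ifP => [//|]; rewrite lte_fin => /negbT.
by rewrite -leNgt lee_fin subr_le0.
Qed.


Lemma mu_empty S : (forall t, ~ pre S t) -> mu S = 0.
Proof.
move=> h; rewrite /mu (_ : pre S = set0) ?measure0//.
by apply/seteqP; split => t // /h.
Qed.

Lemma meas_sqd x0 y0 s r : measurable (pre [set z | sqd x0 y0 s z <= r]).
Proof.
have mh := continuous_measurable_fun (@hq_cont _ w1 w2 F M hw hF M0 x0 y0 s).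
have := mh measurableT _ (measurable_itv `]-oo, r]).
rewrite setTI => H.
have -> : pre [set z | sqd x0 y0 s z <= r] = `[a, b] `&` (hq w1 w2 F x0 y0 s @^-1` `]-oo, r]).
  apply/seteqP; split => t /=.
    by move=> [h1 h2]; split; rewrite /= in_itv /= ?h1// ?h2.
  by rewrite !in_itv /= => -[h1 h2]; split.
by apply: measurableI => //; exact: measurable_itv.
Qed.

Lemma pre_setD S T : pre (S `\` T) = pre S `\` pre T.
Proof.
apply/seteqP; split => t.
  by move=> [h [h1 h2]]; split => // -[_ ?].
by move=> [[h h1] h2]; split => //; split => // h3; apply: h2.
Qed.

Lemma mu_box S x0 y0 s r : 0 <= s + 2 * r ->
  S `<=` [set z | sqd x0 y0 s z <= r] -> mu S <= 4 * (s + 2 * r).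
Proof.
move=> W0 SQ.
have [[t1 Ht1]|nE] := pselect (exists t, pre S t); last first.
  rewrite /mu; have -> : pre S = set0 by apply/seteqP; split => t // Ht; apply: nE; exists t.
  by rewrite /mu measure0 /= mulr_ge0.
have sub : pre S `<=` `[t1 - 2 * (s + 2 * r), t1 + 2 * (s + 2 * r)].
  move=> t Ht; rewrite /= in_itv /=.
  case: Ht1 => _ /SQ /sqd_leP[h1 h2 h3 h4].
  case: Ht => _ /SQ /sqd_leP[k1 k2 k3 k4].
  have := @gam_close _ w1 w2 F hw t t1 (s + 2 * r).
  rewrite !ler_norml.
  move=> /(_ _ _)/andP; case.
  - by apply/andP; split; lra.
  - by apply/andP; split; lra.
  by move=> H1 H2; apply/andP; split; lra.
rewrite -lee_fin -lm_pre (le_trans (lmono sub))//.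
rewrite lebesgue_measure_itv/=; case: ifP => _; last by rewrite lee_fin mulr_ge0.
by rewrite lee_fin; lra.
Qed.

End Meas.


Fixpoint D {R : realType} (N : nat) (x0 y0 s : R) : set (R * R) :=
  if N is N'.+1 then
    D N' x0 y0 (s / 4) `|` D N' (x0 + 3 * s / 4) y0 (s / 4) `|`
    D N' x0 (y0 + 3 * s / 4) (s / 4) `|` D N' (x0 + 3 * s / 4) (y0 + 3 * s / 4) (s / 4)
  else [set z | sqd x0 y0 s z <= s / 4].

Lemma D_sub {R : realType} N (x0 y0 s : R) : 0 <= s ->
  D N x0 y0 s `<=` [set z | sqd x0 y0 s z <= s / 4].
Proof.
elim: N x0 y0 s => [x0 y0 s _ z //|N IH x0 y0 s s0 z /=].
have s4 : 0 <= s / 4 by rewrite divr_ge0.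
move=> [[[/(IH _ _ _ s4)|/(IH _ _ _ s4)]|/(IH _ _ _ s4)]|/(IH _ _ _ s4)] /=;
  move=> /sqd_leP[h1 h2 h3 h4]; apply/sqd_leP; split; lra.
Qed.

Lemma disj_sq {R : realType} (p1 q1 p2 q2 t r : R) :
  (p1 + t + r < p2 - r \/ p2 + t + r < p1 - r \/ q1 + t + r < q2 - r \/ q2 + t + r < q1 - r) ->
  [set z | sqd p1 q1 t z <= r] `&` [set z | sqd p2 q2 t z <= r] = set0.
Proof.
move=> H; apply/seteqP; split => z // [/= /sqd_leP[h1 h2 h3 h4] /sqd_leP[k1 k2 k3 k4]].
by case: H => [|[|[|]]] H; lra.
Qed.

Section Key.
Context {R : realType} (w1 w2 : R * R) (F : R -> R) (M a b : R).
Hypotheses (hw : orthonormal2 w1 w2) (hF : lipschitz_le F M) (M0 : 0 < M) (ab : a <= b).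

Local Notation gam := (gam w1 w2 F).
Local Notation mu := (mu w1 w2 F a b).
Local Notation pre := (pre w1 w2 F a b).
Local Notation hq := (hq w1 w2 F).

Lemma meas_D N x0 y0 s : measurable (pre (D N x0 y0 s)).
Proof.
elim: N x0 y0 s => [|N IH] x0 y0 s /=; first exact: meas_sqd.
by rewrite !pre_setU; do 3 apply: measurableU => //.
Qed.


Definition K := 24 * (1 + M).

Lemma K0 : 0 < K.
Proof. by rewrite /K mulr_gt0// addr_gt0. Qed.

Lemma child (p q t : R) : 0 < t -> 4 * t < b - a ->
  mu [set z | sqd p q t z <= t / 4] * (1 + K^-1) <= mu [set z | sqd p q t z <= t / 2].
Proof.
move=> t0 tab.
set Cp := [set z | sqd p q t z <= t / 4].
set Cpp := [set z | sqd p q t z <= t / 2].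
have CC : Cp `<=` Cpp by move=> z; rewrite /Cp /Cpp /= => h; rewrite (le_trans h)// ler_pM2l// ?ltW//; lra.
have -> : Cpp = Cp `|` (Cpp `\` Cp).
  by apply/seteqP; split => z; [move=> h; case: (pselect (Cp z)) => h'; [left|right]|move=> [/CC|[]]].
have mCp : measurable (pre Cp) by exact: meas_sqd.
have mA : measurable (pre (Cpp `\` Cp)) by rewrite pre_setD; apply: measurableD; exact: meas_sqd.
rewrite mu_Udisj//; last by apply/seteqP; split => z // [? []].
rewrite mulrDr mulr1 lerD2l.
have hb : mu Cp <= 4 * (t + 2 * (t / 4)) by apply: mu_box => //; [lra|move=> z Hz; exact: Hz].
have [[t1 [/andP[at1 t1b] Ht1]]|nE] := pselect (exists t1, pre Cp t1); last first.
  rewrite (@mu_empty _ w1 w2 F a b Cp); first by rewrite mul0r mu_ge0.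
  by move=> t2 h; apply: nE; exists t2.
have hql : forall s1 s2, hq p q t s1 <= hq p q t s2 + (1 + M) * `|s1 - s2|.
  by move=> s1 s2; apply: hq_lip.
have L0 : 0 < 1 + M by rewrite addr_gt0.
have [u [v [au vb uvL Hin]]] : exists u v, [/\ a <= u, v <= b, t / 4 <= (1 + M) * (v - u) &
    forall s, u < s -> s < v -> (Cpp `\` Cp) (gam s)].
  have [hbig|hsmall] := leP (t / 2) (hq p q t b).
    have [u [v [t1u uv vb Lu Hu]]] := @crossing _ (hq p q t) (1 + M) t1 b (t / 4) (t / 2) L0 hql t1b Ht1 (ltac:(lra)) hbig.
    exists u, v; split => //; first by rewrite (le_trans at1).
      by rewrite (le_trans _ Lu)//; lra.
    move=> s us sv; have [h1 h2] := Hu s us sv.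
    by split; rewrite /Cpp /Cp /=; [exact: ltW|apply/negP; rewrite -ltNge].
  have [hbig'|hsmall'] := leP (t / 2) (hq p q t a); last first.
    exfalso.
    have := @gam_close _ w1 w2 F hw a b (t + 2 * (t / 2)).
    move: (ltW hsmall) (ltW hsmall') => /sqd_leP[h1 h2 h3 h4] /sqd_leP[k1 k2 k3 k4].
    rewrite !ler_norml => /(_ _ _)/andP; case.
    - by apply/andP; split; lra.
    - by apply/andP; split; lra.
    by move=> H1 H2; lra.
  pose h' := fun s => hq p q t (- s).
  have hql' : forall s1 s2, h' s1 <= h' s2 + (1 + M) * `|s1 - s2|.
    move=> s1 s2; rewrite /h'; have := hql (- s1) (- s2).
    have -> : - s1 - - s2 = - (s1 - s2) by ring.
    by rewrite normrN.
  have [u [v [t1u uv vb Lu Hu]]] := @crossing _ h' _ (- t1) (- a) (t / 4) (t / 2) L0 hql'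
    (ltac:(rewrite lerN2 //)) (ltac:(rewrite /h' opprK //)) (ltac:(lra))
    (ltac:(rewrite /h' opprK //)).
  exists (- v), (- u); split.
  - by rewrite lerNr.
  - by rewrite lerNl (le_trans _ t1u)// lerN2.
  - have -> : - u - - v = v - u by ring.
    by rewrite (le_trans _ Lu)//; lra.
  move=> s us sv.
  have [h1 h2] := Hu (- s) (ltac:(by rewrite ltrNr)) (ltac:(by rewrite ltrNl)).
  rewrite /h' opprK in h1 h2.
  by split; rewrite /Cpp /Cp /=; [exact: ltW|apply/negP; rewrite -ltNge].
have uvmu : v - u <= mu (Cpp `\` Cp) by apply: mu_itv; [exact: au|exact: vb|exact: Hin].
have uvmu' : (1 + M) * (v - u) <= (1 + M) * mu (Cpp `\` Cp) by rewrite ler_wpM2l// ltW.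
rewrite ler_pdivrMr ?K0// /K.
move: hb uvmu' uvL; set x := mu Cp; set y := mu (Cpp `\` Cp); set z := (1 + M) * y.
move=> hb h1 h2.
have -> : y * (24 * (1 + M)) = 24 * z by rewrite /z; ring.
lra.
Qed.
Lemma sum_pp x0 y0 s : 0 < s ->
  mu [set z | sqd x0 y0 (s / 4) z <= s / 4 / 2] +
  mu [set z | sqd (x0 + 3 * s / 4) y0 (s / 4) z <= s / 4 / 2] +
  mu [set z | sqd x0 (y0 + 3 * s / 4) (s / 4) z <= s / 4 / 2] +
  mu [set z | sqd (x0 + 3 * s / 4) (y0 + 3 * s / 4) (s / 4) z <= s / 4 / 2]
  <= mu (D 0 x0 y0 s).
Proof.
move=> s0.
set A := [set z | sqd x0 y0 _ z <= _].
set B := [set z | sqd (x0 + _) y0 _ z <= _].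
set C := [set z | sqd x0 (y0 + _) _ z <= _].
set E := [set z | sqd (x0 + _) (y0 + _) _ z <= _].
have mA : measurable (pre A) by exact: meas_sqd.
have mB : measurable (pre B) by exact: meas_sqd.
have mC : measurable (pre C) by exact: meas_sqd.
have mE : measurable (pre E) by exact: meas_sqd.
have dAB : A `&` B = set0 by apply: disj_sq; lra.
have dAC : A `&` C = set0 by apply: disj_sq; lra.
have dAE : A `&` E = set0 by apply: disj_sq; lra.
have dBC : B `&` C = set0 by apply: disj_sq; lra.
have dBE : B `&` E = set0 by apply: disj_sq; lra.
have dCE : C `&` E = set0 by apply: disj_sq; lra.
rewrite -(@mu_Udisj _ w1 w2 F a b _ _ mA mB dAB).
rewrite -(@mu_Udisj _ w1 w2 F a b _ _ _ mC); last 2 first.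
- by rewrite pre_setU; apply: measurableU.
- by rewrite setIUl dAC dBC setU0.
rewrite -(@mu_Udisj _ w1 w2 F a b _ _ _ mE); last 2 first.
- by rewrite !pre_setU; do 2 apply: measurableU => //.
- by rewrite !setIUl dAE dBE dCE !setU0.
apply: mu_mono => z /=.
by move=> [[[]|]|] /sqd_leP[h1 h2 h3 h4]; apply/sqd_leP; split; lra.
Qed.

Lemma step_coarse x0 y0 s : 0 < s ->
  mu (D 0 x0 y0 (s / 4)) + mu (D 0 (x0 + 3 * s / 4) y0 (s / 4)) +
  mu (D 0 x0 (y0 + 3 * s / 4) (s / 4)) + mu (D 0 (x0 + 3 * s / 4) (y0 + 3 * s / 4) (s / 4))
  <= mu (D 0 x0 y0 s).
Proof.
move=> s0; apply: le_trans _ (sum_pp _ _ _ s0).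
by rewrite !lerD//; apply: mu_mono => z /= h; rewrite (le_trans h)//; lra.
Qed.

Lemma K1 : 0 < 1 + K^-1.
Proof. by rewrite addr_gt0// invr_gt0 K0. Qed.

Lemma step_fine x0 y0 s : 0 < s -> s < b - a ->
  mu (D 0 x0 y0 (s / 4)) + mu (D 0 (x0 + 3 * s / 4) y0 (s / 4)) +
  mu (D 0 x0 (y0 + 3 * s / 4) (s / 4)) + mu (D 0 (x0 + 3 * s / 4) (y0 + 3 * s / 4) (s / 4))
  <= mu (D 0 x0 y0 s) / (1 + K^-1).
Proof.
move=> s0 sab; rewrite ler_pdivlMr ?K1//; apply: le_trans _ (sum_pp _ _ _ s0).
have t0 : 0 < s / 4 by lra.
have t4 : 4 * (s / 4) < b - a by lra.
by rewrite !mulrDl !lerD//; apply: child.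
Qed.

Lemma mu_U4 A B C E : measurable (pre A) -> measurable (pre B) ->
  measurable (pre C) -> measurable (pre E) ->
  mu (A `|` B `|` C `|` E) <= mu A + mu B + mu C + mu E.
Proof.
move=> mA mB mC mE.
apply: le_trans (@mu_U _ w1 w2 F a b _ _ _ mE) _.
  by rewrite !pre_setU; do 2 apply: measurableU => //.
rewrite lerD2r; apply: le_trans (@mu_U _ w1 w2 F a b _ _ _ mC) _.
  by rewrite !pre_setU; apply: measurableU => //.
by rewrite lerD2r; apply: (@mu_U _ w1 w2 F a b _ _ mA mB).
Qed.

Definition rho := (1 + K^-1)^-1.

Lemma rho_ge0 : 0 <= rho.
Proof. by rewrite /rho invr_ge0 ltW// K1. Qed.

Lemma decay N0 j x0 y0 s : 0 < s -> s / 4 ^+ N0 < b - a ->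
  mu (D (N0 + j) x0 y0 s) <= rho ^+ j * mu (D 0 x0 y0 s).
Proof.
elim: N0 x0 y0 s => [|N0 IH] x0 y0 s s0 hs.
  rewrite add0n; rewrite expr0 divr1 in hs.
  elim: j x0 y0 s s0 hs => [|j IHj] x0 y0 s s0 hs; first by rewrite expr0 mul1r.
  have t0 : 0 < s / 4 by lra.
  have t1 : s / 4 < b - a by lra.
  rewrite /=; apply: le_trans (mu_U4 _ _ _ _ (meas_D _ _ _ _) (meas_D _ _ _ _) (meas_D _ _ _ _) (meas_D _ _ _ _)) _.
  apply: (@le_trans _ _ (rho ^+ j * (mu (D 0 x0 y0 (s / 4)) + mu (D 0 (x0 + 3 * s / 4) y0 (s / 4)) +
    mu (D 0 x0 (y0 + 3 * s / 4) (s / 4)) + mu (D 0 (x0 + 3 * s / 4) (y0 + 3 * s / 4) (s / 4))))).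
    by rewrite !mulrDr !lerD// IHj.
  rewrite exprSr -[rho ^+ j * rho * _]mulrA ler_wpM2l ?exprn_ge0 ?rho_ge0//.
  by rewrite [rho * _]mulrC; exact: (step_fine _ _ _ s0 hs).
have t0 : 0 < s / 4 by lra.
have t1 : s / 4 / 4 ^+ N0 < b - a.
  by move: hs; rewrite exprS invfM mulrA.
rewrite addSn /=.
apply: le_trans (mu_U4 _ _ _ _ (meas_D _ _ _ _) (meas_D _ _ _ _) (meas_D _ _ _ _) (meas_D _ _ _ _)) _.
apply: (@le_trans _ _ (rho ^+ j * (mu (D 0 x0 y0 (s / 4)) + mu (D 0 (x0 + 3 * s / 4) y0 (s / 4)) +
  mu (D 0 x0 (y0 + 3 * s / 4) (s / 4)) + mu (D 0 (x0 + 3 * s / 4) (y0 + 3 * s / 4) (s / 4))))).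
  by rewrite !mulrDr !lerD// IH.
by rewrite ler_wpM2l ?exprn_ge0 ?rho_ge0// step_coarse.
Qed.

End Key.


Fixpoint pref {R : realType} (N : nat) (p : R) : Prop :=
  if N is N'.+1 then exists e p', [/\ e = 0 \/ e = 3, pref N' p' & p = e / 4 + p' / 4]
  else p = 0.

Lemma D_pref {R : realType} N (x0 y0 s p q : R) z : 0 < s -> pref N p -> pref N q ->
  sqd (x0 + s * p) (y0 + s * q) (s / 4 ^+ N) z <= s / 4 ^+ N / 4 -> D N x0 y0 s z.
Proof.
elim: N x0 y0 s p q => [|N IH] x0 y0 s p q s0 /=.
  by move=> -> ->; rewrite !mulr0 !addr0 expr0 divr1.
move=> [e [p' [he hp' ->]]] [f [q' [hf hq' ->]]].
rewrite exprS invfM mulrA.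
have s4 : 0 < s / 4 by lra.
have Ex : forall x e, x + s * (e / 4 + p' / 4) = (x + s * e / 4) + s / 4 * p' by move=> *; ring.
have Ey : forall y f, y + s * (f / 4 + q' / 4) = (y + s * f / 4) + s / 4 * q' by move=> *; ring.
rewrite Ex Ey.
case: he => ->; case: hf => ->.
- by rewrite !mulr0 !mul0r !addr0 => H; left; left; left; apply: IH H.
- rewrite mulr0 mul0r addr0 [s * 3]mulrC => H; left; right; exact: IH H.
- rewrite mulr0 mul0r addr0 [s * 3]mulrC => H; left; left; right; exact: IH H.
- rewrite [s * 3]mulrC => H; right; exact: IH H.
Qed.

Definition S {R : realType} (ad : nat -> nat) (M : nat) : R :=
  \sum_(1 <= k < M) (ad k)%:R / 4 ^+ k.

Lemma S_pref {R : realType} N (ad : nat -> nat) :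
  (forall k, (1 <= k <= N)%N -> ad k = 0%N \/ ad k = 3%N) ->
  pref N (S ad N.+1 : R).
Proof.
elim: N ad => [|N IH] ad' H.
  by rewrite /S big_geq.
exists (ad' 1)%:R, (\sum_(1 <= k < N.+1) (ad' k.+1)%:R / 4 ^+ k); split.
- by case: (H 1%N (ltac:(by []))) => ->; [left|right].
- apply: (IH (fun k => ad' k.+1)) => k /andP[k1 kN].
  by apply: H; apply/andP; split.
rewrite /S big_nat_recl// expr1; congr (_ + _).
rewrite mulr_suml; apply: eq_bigr => i _.
by rewrite exprSr invfM mulrA.
Qed.

Lemma S_step {R : realType} (ad : nat -> nat) M :
  (S ad M.+1 : R) = S ad M + (if M == 0%N then 0 else (ad M)%:R / 4 ^+ M).
Proof.
case: M => [|M]; first by rewrite /S !big_geq// addr0.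
by rewrite /S big_nat_recr.
Qed.

Lemma S_mono {R : realType} (ad : nat -> nat) : nondecreasing_seq (S ad : nat -> R).
Proof.
apply/nondecreasing_seqP => M; rewrite S_step lerDl.
by case: ifP => // _; rewrite divr_ge0// exprn_ge0.
Qed.

Lemma S_tail {R : realType} (ad : nat -> nat) N d : (forall k, (ad k <= 3)%N) ->
  (S ad (N.+1 + d) : R) <= S ad N.+1 + 1 / 4 ^+ N - 1 / 4 ^+ (N + d).
Proof.
move=> H3; elim: d => [|d IH].
  by rewrite !addn0 addrK.
rewrite addnS S_step addSn /=; rewrite addSn in IH.
have X0 : 0 < (4 : R) ^+ (N + d) by rewrite exprn_gt0.
have t : (ad (N + d).+1)%:R / 4 ^+ (N + d).+1 <= 3 * (1 / (4 : R) ^+ (N + d).+1).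
  rewrite mul1r ler_pM2r ?invr_gt0 ?exprn_gt0//.
  by rewrite ler_nat.
have e : 1 / (4 : R) ^+ (N + d) = 4 * (1 / 4 ^+ (N + d).+1).
  by rewrite exprSr; field; rewrite gt_eqF.
rewrite addnS.
move: IH t; rewrite e; lra.
Qed.

Lemma S_bound {R : realType} (ad : nat -> nat) N M : (forall k, (ad k <= 3)%N) ->
  (S ad M : R) <= S ad N.+1 + 1 / 4 ^+ N.
Proof.
move=> H3.
have h4 : 0 <= 1 / (4 : R) ^+ N by rewrite divr_ge0// exprn_ge0.
case: (leqP M N.+1) => hM.
  by rewrite (le_trans (@S_mono R ad _ _ hM))// lerDl.
have -> : M = (N.+1 + (M - N.+1))%N by rewrite subnKC// ltnW.
rewrite (le_trans (@S_tail R ad _ _ H3))// lerBlDr lerDl divr_ge0// exprn_ge0.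
Qed.

Lemma Kset_pref {R : realType} n N (x : R) : (N <= n)%N -> Kset n x ->
  exists p, [/\ pref N p, p <= x & x <= p + 1 / 4 ^+ N].
Proof.
move=> Nn [ad [H03 [H3 ->]]].
have cv : cvgn (S ad : nat -> R).
  apply: nondecreasing_is_cvgn; first exact: S_mono.
  by exists (S ad 1 + 1 / 4 ^+ 0) => _ [M _ <-]; exact: S_bound.
have -> : (fun N0 : nat => \sum_(1 <= k < N0) (ad k)%:R / 4 ^+ k) = (S ad : nat -> R) by [].
exists (S ad N.+1); split.
- apply: S_pref => k /andP[k1 kN]; apply: H03.
  by rewrite k1 (leq_trans kN Nn).
- exact: nondecreasing_cvgn_le (S_mono _) cv _.
- apply: limr_le => //; apply: nearW => M; exact: S_bound.
Qed.


Lemma bern {R : realType} (x : R) j : 0 <= x -> 1 + j%:R * x <= (1 + x) ^+ j.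
Proof.
move=> x0; elim: j => [|j IH]; first by rewrite mul0r addr0 expr0.
rewrite exprS (le_trans _ (ler_wpM2l _ IH)) ?addr_ge0//.
have := ler0n R j; rewrite -addn1 natrD; move=> hj; nra.
Qed.

Lemma pow2_le {R : realType} (k1 k2 : nat) : (k1 <= k2)%N -> (2 ^+ k2 : R)^-1 <= (2 ^+ k1)^-1.
Proof.
move=> k12; rewrite lef_pV2 ?posrE ?exprn_gt0// ler_eXn2l// ltr1n//.
Qed.

Lemma pow2_lt {R : realType} (k1 k2 : nat) : (k1 < k2)%N -> (2 ^+ k2 : R)^-1 < (2 ^+ k1)^-1.
Proof.
move=> k12; rewrite ltf_pV2 ?posrE ?exprn_gt0// ltr_eXn2l// ltr1n//.
Qed.

Lemma four_pow {R : realType} N : 1 / (4 : R) ^+ N = (2 ^+ (2 * N))^-1.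
Proof. by rewrite exprM mul1r (_ : 2 ^+ 2 = 4 :> R)// expr2 -natrM. Qed.

Theorem propositionA1 (R : realType) :
  exists C : R, 0 < C /\
    forall (n m l : nat), (l < m)%N -> (m <= n)%N ->
    forall M : R, 0 < M ->
      (rect_const (@Kset R n `*` @Kset R n) (2 ^- m) (2 ^- l) M
        <= (C * (1 + M) / (m - l)%:R)%:E)%E.
Proof.
exists 48; split => // n m l lm mn M M0.
apply: ge_ereal_sup => _ [w1 [w2 [F [a [b [hw [hF [hr ->]]]]]]]].
set B := 48 * (1 + M) / (m - l)%:R.
have d0 : 0 < (m - l)%:R :> R by rewrite ltr0n subn_gt0.
have r0 : 0 < (2 ^+ l : R)^-1 by rewrite invr_gt0 exprn_gt0.
have ab' : 0 < b - a by apply: lt_le_trans hr.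
have ab : a <= b by rewrite -subr_ge0 ltW.
set hit := hit_set _ _ _ _ _ _ _.
suff H : (lebesgue_measure hit <= (B * (b - a))%:E)%E.
  apply: le_trans (lee_wpmul2r _ H) _; first by rewrite lee_fin invr_ge0 ltW.
  by rewrite -EFinM mulfK// gt_eqF.
have B0 : 0 < B by rewrite /B divr_gt0// mulr_gt0// addr_gt0.
have hsub : hit `<=` `[a, b] by move=> x [].
case: (leqP (m - l) 6) => hml.
  apply: le_trans (lmono hsub) _.
  rewrite lebesgue_measure_itv /= lte_fin; case: ifP => _; last first.
    by rewrite lee_fin mulr_ge0// ltW.
  have B1 : 1 <= B.
    rewrite /B ler_pdivlMr// mul1r.
    rewrite (le_trans (_ : _ <= 6%:R))// ?ler_nat//; lra.
  by rewrite -EFinD lee_fin ler_peMl// subr_ge0.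
pose N := (m %/ 2 - 1)%N; pose N0 := (l %/ 2 + 1)%N; pose j := (N - N0)%N.
have hN : (N <= n)%N by rewrite /N; lia.
have h2N : (2 * N.+1 <= m)%N by rewrite /N; lia.
have hN0 : (N0 + j = N)%N by rewrite /j /N /N0; lia.
have hl : (l < 2 * N0)%N by rewrite /N0; lia.
have hj : (m - l <= 2 * j + 6)%N by rewrite /j /N /N0; lia.
have w21 : `|w2.1| <= 1 by case: hw => _ [h _]; exact: sq_le1 h.
have w22 : `|w2.2| <= 1 by case: hw => _ [h _]; rewrite addrC in h; exact: sq_le1 h.
have sub : hit `<=` pre w1 w2 F a b (D N 0 0 1).
  move=> x [xab [y [hy [X1 X2]]]].
  split; first by move: xab; rewrite in_itv.
  have [p [pp p1 p2]] := Kset_pref _ _ _ hN X1.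
  have [q [pq q1 q2]] := Kset_pref _ _ _ hN X2.
  apply: (@D_pref _ N 0 0 1 p q) => //.
  rewrite !add0r !mul1r; apply/sqd_leP.
  have e : 2 ^- m <= 1 / (4 : R) ^+ N / 4.
    have -> : 1 / (4 : R) ^+ N / 4 = 1 / 4 ^+ N.+1 by rewrite exprSr invfM mulrA.
    by rewrite four_pow; apply: pow2_le.
  have g1 : (graph_pt w1 w2 F x y).1 = (gam w1 w2 F x).1 + y * w2.1 by rewrite /gam /graph_pt /=; ring.
  have g2 : (graph_pt w1 w2 F x y).2 = (gam w1 w2 F x).2 + y * w2.2 by rewrite /gam /graph_pt /=; ring.
  have hy' : `|y| <= 2 ^- m by rewrite ler_norml.
  have ey1 : `|y * w2.1| <= 2 ^- m by rewrite normrM (le_trans _ hy')// ler_piMr.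
  have ey2 : `|y * w2.2| <= 2 ^- m by rewrite normrM (le_trans _ hy')// ler_piMr.
  move: p1 p2 q1 q2; rewrite g1 g2.
  move: ey1 ey2 => /ler_normlP[e1 e1'] /ler_normlP[e2 e2'].
  move=> p1 p2 q1 q2; split; lra.
have m1 : (lebesgue_measure hit <= (mu w1 w2 F a b (D N 0 0 1))%:E)%E.
  by rewrite -lm_pre; exact: lmono sub.
apply: le_trans m1 _; rewrite lee_fin.
have h4 : 1 / (4 : R) ^+ N0 < b - a.
  by rewrite four_pow (lt_le_trans (pow2_lt _ _ hl)).
have dec := @decay _ w1 w2 F M a b hw hF M0 N0 j 0 0 1 ltr01 h4.
rewrite hN0 in dec; apply: le_trans dec _.
have mle := @mu_le _ w1 w2 F a b ab (D 0 0 0 1).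
have rB : rho M ^+ j <= B.
  have K0' : 0 < K M by rewrite /K mulr_gt0// addr_gt0.
  rewrite /rho exprVn.
  have Kpos : 0 < (K M)^-1 by rewrite invr_gt0.
  have hb := @bern R (K M)^-1 j (ltW Kpos).
  have hb0 : 0 < 1 + j%:R * (K M)^-1 by apply: (lt_le_trans ltr01); rewrite lerDl mulr_ge0// ltW.
  apply: (@le_trans _ _ (1 + j%:R * (K M)^-1)^-1).
    by rewrite lef_pV2 ?posrE// (lt_le_trans hb0 hb).
  have hd : (m - l)%:R <= 2 * j%:R + 6 :> R.
    by rewrite (_ : 2 * j%:R + 6 = (2 * j + 6)%:R :> R) ?ler_nat// natrD natrM.
  have J0 : 0 <= j%:R :> R by [].
  set J := j%:R in hb0 hd J0 *; set d := (m - l)%:R in d0 hd *.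
  have KJ : 0 < K M + J by apply: (lt_le_trans K0'); rewrite lerDl.
  rewrite (_ : (1 + J * (K M)^-1)^-1 = K M / (K M + J)); last first.
    by field; rewrite !gt_eqF.
  rewrite ler_pdivrMr// /B mulrAC ler_pdivlMr// /K.
  nra.
by rewrite ler_pM ?exprn_ge0 ?mu_ge0// ?rho_ge0.
Qed.
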